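(* Under the hypotheses of the previous proposition (Assumption (A), $q\in[0,1)$, $l\ge0$, $S_H>0$, positive epidemiological parameters, $\hat R_e h(p(0),q)>1$, $n=1$, and existence of an equilibrium of (O) with $I_H^*>0$), if $\gamma\ge\mu$ then this equilibrium is locally asymptotically stable for every $k>0$.
   Context: Assumption (A): $a,w:[0,\infty)\to(0,\infty)$ are continuously differentiable with $a'(x)>0$ and $w'(x)\le0$ for all $x\ge0$. Let $c(p,q):=1-p(1-q)$, $p(x):=a(x)/(a(x)+w(x))$, $h(p,q):=c(p,q)/(c(p,q)+l)$, $f(x):=h(p(x),q)$, and $\hat R_e:=\sqrt{\frac{\beta_{H\leftarrow M}\beta_{M\leftarrow H}}{\gamma\mu}\rho S_H}$. For $n=1$, system (O) is, with $S_H>0$ fixed, $$\dot I_H=\beta_{H\leftarrow M}\rho S_H f(J)I_M-\gamma I_H,\qquad \dot I_M=\beta_{M\leftarrow H}f(J)I_H-\mu I_M,\qquad \dot J=kI_H-kJ.$$ *)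

(* Defs.v *)
From Stdlib Require Import Reals Lra.
From Coquelicot Require Import Coquelicot.
Open Scope R_scope.

Definition cfun (p q : R) : R := 1 - p * (1 - q).
Definition hfun (l p q : R) : R := cfun p q / (cfun p q + l).
Definition pfun (a w : R -> R) (x : R) : R := a x / (a x + w x).
Definition ffun (a w : R -> R) (l q : R) (x : R) : R := hfun l (pfun a w x) q.

Definition Re_hat (bHM bMH gamma mu rho SH : R) : R :=
  sqrt (bHM * bMH / (gamma * mu) * rho * SH).

Definition rhs_IH (a w : R -> R) (l q bHM rho SH gamma : R)
  (IH IM J : R) : R := bHM * rho * SH * ffun a w l q J * IM - gamma * IH.
Definition rhs_IM (a w : R -> R) (l q bMH mu : R)
  (IH IM J : R) : R := bMH * ffun a w l q J * IH - mu * IM.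
Definition rhs_J (k : R) (IH IM J : R) : R := k * IH - k * J.

Definition dist3 (x1 x2 x3 y1 y2 y3 : R) : R :=
  sqrt ((x1 - y1) ^ 2 + (x2 - y2) ^ 2 + (x3 - y3) ^ 2).

Definition ode_solution (F1 F2 F3 : R -> R -> R -> R) (T : Rbar)
  (x1 x2 x3 : R -> R) : Prop :=
  (forall t, 0 < t -> Rbar_lt t T ->
     is_derive x1 t (F1 (x1 t) (x2 t) (x3 t)) /\
     is_derive x2 t (F2 (x1 t) (x2 t) (x3 t)) /\
     is_derive x3 t (F3 (x1 t) (x2 t) (x3 t))) /\
  filterlim x1 (at_right 0) (locally (x1 0)) /\
  filterlim x2 (at_right 0) (locally (x2 0)) /\
  filterlim x3 (at_right 0) (locally (x3 0)).

Definition locally_asymptotically_stable (F1 F2 F3 : R -> R -> R -> R)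
  (e1 e2 e3 : R) : Prop :=
  (forall eps, 0 < eps -> exists delta, 0 < delta /\
     forall (T : Rbar) x1 x2 x3, ode_solution F1 F2 F3 T x1 x2 x3 ->
       dist3 (x1 0) (x2 0) (x3 0) e1 e2 e3 < delta ->
       forall t, 0 <= t -> Rbar_lt t T ->
         dist3 (x1 t) (x2 t) (x3 t) e1 e2 e3 < eps) /\
  (exists delta0, 0 < delta0 /\
     forall x1 x2 x3, ode_solution F1 F2 F3 p_infty x1 x2 x3 ->
       dist3 (x1 0) (x2 0) (x3 0) e1 e2 e3 < delta0 ->
       is_lim x1 p_infty e1 /\ is_lim x2 p_infty e2 /\ is_lim x3 p_infty e3).

(* Main.v *)
Require Import Defs.
From Stdlib Require Import Reals Lra Psatz.
From Coquelicot Require Import Coquelicot.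
Open Scope R_scope.

Lemma loc_eps (F : (R -> Prop) -> Prop) (v : R -> R) (l : R) :
  filterlim v F (locally l) -> forall eps, 0 < eps -> F (fun t => Rabs (v t - l) < eps).
Proof.
  intros H eps He. apply (H (fun y => Rabs (y - l) < eps)). exists (mkposreal eps He). intros y Hy. exact Hy.
Qed.

Lemma rc_eps (v : R -> R) (x0 l : R) :
  filterlim v (at_right x0) (locally l) ->
  forall eps, 0 < eps -> exists del, 0 < del /\
    forall t, x0 < t < x0 + del -> Rabs (v t - l) < eps.
Proof.
  intros H eps He. destruct (loc_eps _ _ _ H eps He) as [d Hd].
  exists d. split. apply cond_pos. intros t Ht. apply Hd. 2: lra.
  change (Rabs (t - x0) < d). rewrite Rabs_right; lra.
Qed.

Lemma c_eps (v : R -> R) (x0 : R) :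
  continuous v x0 ->
  forall eps, 0 < eps -> exists del, 0 < del /\
    forall t, Rabs (t - x0) < del -> Rabs (v t - v x0) < eps.
Proof.
  intros H eps He. destruct (loc_eps _ _ _ H eps He) as [d Hd].
  exists d. split. apply cond_pos. intros t Ht. apply Hd. exact Ht.
Qed.

Lemma der_cont (v : R -> R) t d : is_derive v t d -> continuous v t.
Proof. intro H. exact (@ex_derive_continuous R_AbsRing R_NormedModule v t (ex_intro _ d H)). Qed.

Lemma der_cpt (v : R -> R) t d : is_derive v t d -> continuity_pt v t.
Proof. intro H. apply continuity_pt_filterlim. apply (der_cont v t d H). Qed.

Lemma barrier (v dv : R -> R) (T : Rbar) (L : R) :
  (forall t, 0 < t -> Rbar_lt t T -> is_derive v t (dv t)) ->
  filterlim v (at_right 0) (locally (v 0)) ->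
  v 0 < L ->
  (forall t, 0 < t -> Rbar_lt t T -> v t < L -> dv t <= 0) ->
  forall t, 0 <= t -> Rbar_lt t T -> v t <= v 0.
Proof.
  intros Hd Hrc HL Hneg t1 Ht1 Ht1T.
  destruct (Rle_or_lt (v t1) (v 0)) as [Hle|Hgt]; [exact Hle|exfalso].
  assert (Ht1p : 0 < t1).
  { destruct Ht1 as [H|H]; auto. subst. lra. }
  assert (HinT : forall s, 0 <= s <= t1 -> Rbar_lt s T).
  { intros s Hs. apply Rbar_le_lt_trans with (Finite t1); auto. simpl; lra. }
  assert (Hcont : forall s, 0 < s <= t1 -> continuous v s).
  { intros s Hs. apply der_cont with (dv s). apply Hd. lra. apply HinT; lra. }
  set (m := (v 0 + Rmin (v t1) L) / 2).
  assert (Hm1 : v 0 < m) by (unfold m; unfold Rmin; destruct Rle_dec; lra).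
  assert (Hm2 : m < v t1) by (unfold m; unfold Rmin; destruct Rle_dec; lra).
  assert (Hm3 : m < L) by (unfold m; unfold Rmin; destruct Rle_dec; lra).
  set (E := fun s => 0 <= s <= t1 /\ v s <= m).
  assert (HbE : bound E). { exists t1. intros s [Hs _]. lra. }
  assert (HeE : exists s, E s). { exists 0. split; lra. }
  destruct (completeness E HbE HeE) as [tau [Hub Hlub]].
  assert (Ht0 : 0 <= tau). { apply Hub. split; lra. }
  assert (Htt1 : tau <= t1). { apply Hlub. intros s [Hs _]. lra. }
  assert (HA : v tau <= m).
  { destruct (Rle_or_lt (v tau) m) as [H|H]; auto. exfalso.
    destruct Ht0 as [Ht0|Ht0]; [|subst; lra].
    destruct (c_eps v tau (Hcont tau (conj Ht0 Htt1)) (v tau - m)) as [del [Hdel Hc]]; [lra|].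
    assert (tau <= tau - del / 2).
    { apply Hlub. intros s [Hs1 Hs2].
      destruct (Rle_or_lt s (tau - del/2)) as [H1|H1]; auto.
      assert (s <= tau) by (apply Hub; split; auto).
      assert (Rabs (s - tau) < del) by (rewrite Rabs_left1; lra).
      specialize (Hc s H2). apply Rabs_def2 in Hc. lra. }
    lra. }
  assert (HB : tau < t1).
  { destruct Htt1 as [H|H]; auto. subst. lra. }
  assert (HC : m <= v tau).
  { destruct (Rle_or_lt m (v tau)) as [H|H]; auto. exfalso.
    assert (exists del, 0 < del /\ forall s, tau <= s < tau + del -> v s < m) as [del [Hdel Hc]].
    { destruct Ht0 as [Ht0|Ht0].
      - destruct (c_eps v tau (Hcont tau (conj Ht0 (Rlt_le _ _ HB))) (m - v tau)) as [del [Hdel Hc]]; [lra|].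
        exists del. split; auto. intros s Hs.
        assert (Rabs (s - tau) < del) by (rewrite Rabs_right; lra).
        specialize (Hc s H0). apply Rabs_def2 in Hc. lra.
      - subst tau. destruct (rc_eps v 0 (v 0) Hrc (m - v 0)) as [del [Hdel Hc]]; [lra|].
        exists del. split; auto. intros s Hs.
        destruct (Req_dec s 0) as [Hs0|Hs0]; [subst; lra|].
        specialize (Hc s ltac:(lra)). apply Rabs_def2 in Hc. lra. }
    set (s := tau + Rmin del (t1 - tau) / 2).
    assert (Hmin1 : 0 < Rmin del (t1 - tau)) by (apply Rmin_pos; lra).
    assert (Hmin2 : Rmin del (t1 - tau) <= del) by apply Rmin_l.
    assert (Hmin3 : Rmin del (t1 - tau) <= t1 - tau) by apply Rmin_r.
    assert (E s).
    { split. unfold s; lra. apply Rlt_le, Hc. unfold s; lra. }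
    specialize (Hub s H0). unfold s in Hub. lra. }
  assert (Hveq : v tau = m) by lra.
  assert (Htp : 0 < tau).
  { destruct Ht0 as [H|H]; auto. subst. lra. }
  destruct (c_eps v tau (Hcont tau (conj Htp (Rlt_le _ _ HB))) (L - m)) as [del [Hdel Hc]]; [lra|].
  set (s := tau + Rmin del (t1 - tau) / 2).
  assert (Hmin1 : 0 < Rmin del (t1 - tau)) by (apply Rmin_pos; lra).
  assert (Hmin2 : Rmin del (t1 - tau) <= del) by apply Rmin_l.
  assert (Hmin3 : Rmin del (t1 - tau) <= t1 - tau) by apply Rmin_r.
  assert (Hs1 : tau < s) by (unfold s; lra).
  assert (Hs2 : s <= t1) by (unfold s; lra).
  assert (Hvs : m < v s).
  { destruct (Rle_or_lt (v s) m) as [H|H]; auto.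
    assert (s <= tau) by (apply Hub; split; lra). lra. }
  destruct (MVT_gen v tau s dv) as [c [Hc1 Hc2]].
  - intros x Hx. rewrite Rmin_left in Hx by lra. rewrite Rmax_right in Hx by lra.
    apply Hd. lra. apply HinT; lra.
  - intros x Hx. rewrite Rmin_left in Hx by lra. rewrite Rmax_right in Hx by lra.
    apply der_cpt with (dv x). apply Hd. lra. apply HinT; lra.
  - rewrite Rmin_left in Hc1 by lra. rewrite Rmax_right in Hc1 by lra.
    assert (Hvc : v c < L).
    { assert (Rabs (c - tau) < del) by (rewrite Rabs_right; unfold s in Hc1; lra).
      specialize (Hc c H). apply Rabs_def2 in Hc. lra. }
    assert (dv c <= 0) by (apply Hneg; [lra|apply HinT; lra|exact Hvc]).
    assert (dv c * (s - tau) <= 0).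
    { apply Rmult_le_0_r; lra. }
    lra.
Qed.
Lemma decay (v dv : R -> R) (c : R) : 0 < c ->
  (forall t, 0 < t -> is_derive v t (dv t)) ->
  (forall t, 0 < t -> dv t <= - c * v t) ->
  (forall t, 0 <= t -> 0 <= v t) ->
  forall t, 1 <= t -> v t * (1 + c * (t - 1)) <= v 1.
Proof.
  intros Hc Hd Hneg Hpos t Ht.
  destruct Ht as [Ht|Ht]; [|subst; lra].
  set (psi := fun s => v s * (1 + c * (s - 1))).
  set (dpsi := fun s => dv s * (1 + c * (s - 1)) + v s * c).
  assert (Hpd : forall s, 0 < s -> is_derive psi s (dpsi s)).
  { intros s Hs. unfold psi, dpsi.
    assert (H1 : is_derive (fun s => 1 + c * (s - 1)) s c).
    { auto_derive; auto. ring. }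
    generalize (is_derive_mult _ _ s _ _ (Hd s Hs) H1 Rmult_comm). simpl.
    intro H. eapply is_derive_ext. 2: exact H. intro; reflexivity.
    }
  destruct (MVT_gen psi 1 t dpsi) as [x [Hx1 Hx2]].
  - intros x Hx. rewrite Rmin_left in Hx by lra. apply Hpd; lra.
  - intros x Hx. rewrite Rmin_left in Hx by lra. apply der_cpt with (dpsi x). apply Hpd; lra.
  - rewrite Rmin_left in Hx1 by lra. rewrite Rmax_right in Hx1 by lra.
    assert (dpsi x <= 0).
    { unfold dpsi. specialize (Hneg x ltac:(lra)). specialize (Hpos x ltac:(lra)).
      set (P := 1 + c * (x - 1)).
      assert (HP : 0 <= P) by (unfold P; assert (0 <= c * (x - 1)) by (apply Rmult_le_pos; lra); lra).
      assert (dv x * P <= - c * v x * P) by (apply Rmult_le_compat_r; lra).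
      assert (Hk : - c * v x * P + v x * c = - (c * (c * (v x * (x - 1))))) by (unfold P; ring).
      assert (0 <= c * (c * (v x * (x - 1)))) by (repeat apply Rmult_le_pos; lra).
      lra. }
    unfold psi in Hx2. replace (v 1 * (1 + c * (1 - 1))) with (v 1) in Hx2 by ring.
    assert (dpsi x * (t - 1) <= 0) by (apply Rmult_le_0_r; lra). lra.
Qed.

Lemma abs_lt_of_sq a e : 0 < e -> a ^ 2 < e ^ 2 -> Rabs a < e.
Proof. intros He H. apply Rabs_def1; nra. Qed.

Definition Nsq (e1 e2 e3 y1 y2 y3 : R) := (y1 - e1) ^ 2 + (y2 - e2) ^ 2 + (y3 - e3) ^ 2.

Lemma LAS_abstract (F1 F2 F3 : R -> R -> R -> R) (e1 e2 e3 : R)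
  (V : R -> R -> R -> R) (DV : R -> R -> R -> R -> R -> R -> R) (C1 C2 c r : R) :
  0 < C1 -> 0 < C2 -> 0 < c -> 0 < r ->
  (forall (x1 x2 x3 : R -> R) (t v1 v2 v3 : R), is_derive x1 t v1 -> is_derive x2 t v2 ->
     is_derive x3 t v3 ->
     is_derive (fun s => V (x1 s) (x2 s) (x3 s)) t (DV (x1 t) (x2 t) (x3 t) v1 v2 v3)) ->
  (forall (x1 x2 x3 : R -> R), filterlim x1 (at_right 0) (locally (x1 0)) ->
     filterlim x2 (at_right 0) (locally (x2 0)) -> filterlim x3 (at_right 0) (locally (x3 0)) ->
     filterlim (fun s => V (x1 s) (x2 s) (x3 s)) (at_right 0) (locally (V (x1 0) (x2 0) (x3 0)))) ->
  (forall y1 y2 y3, Nsq e1 e2 e3 y1 y2 y3 <= C1 * V y1 y2 y3) ->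
  (forall y1 y2 y3, V y1 y2 y3 <= C2 * Nsq e1 e2 e3 y1 y2 y3) ->
  (forall y1 y2 y3, Nsq e1 e2 e3 y1 y2 y3 < r ->
     DV y1 y2 y3 (F1 y1 y2 y3) (F2 y1 y2 y3) (F3 y1 y2 y3) <= - c * V y1 y2 y3) ->
  locally_asymptotically_stable F1 F2 F3 e1 e2 e3.
Proof.
  intros HC1 HC2 Hc Hr Hder Hrc H1 H2 H3.
  assert (Nnn : forall y1 y2 y3, 0 <= Nsq e1 e2 e3 y1 y2 y3).
  { intros. unfold Nsq. generalize (pow2_ge_0 (y1 - e1)) (pow2_ge_0 (y2 - e2)) (pow2_ge_0 (y3 - e3)). lra. }
  assert (Vnn : forall y1 y2 y3, 0 <= V y1 y2 y3).
  { intros. specialize (H1 y1 y2 y3). specialize (Nnn y1 y2 y3).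
    destruct (Rle_or_lt 0 (V y1 y2 y3)); auto. nra. }
  assert (Trap : forall rho, 0 < rho -> rho <= r -> forall (T : Rbar) x1 x2 x3,
     ode_solution F1 F2 F3 T x1 x2 x3 ->
     dist3 (x1 0) (x2 0) (x3 0) e1 e2 e3 < sqrt (rho / C1 / C2) ->
     forall t, 0 <= t -> Rbar_lt t T ->
       V (x1 t) (x2 t) (x3 t) <= V (x1 0) (x2 0) (x3 0) /\
       V (x1 0) (x2 0) (x3 0) < rho / C1).
  { intros rho Hrho Hrr T x1 x2 x3 [Hode [Hc1 [Hc2 Hc3]]] Hdist t Ht HtT.
    assert (HN0 : Nsq e1 e2 e3 (x1 0) (x2 0) (x3 0) < rho / C1 / C2).
    { apply sqrt_lt_0_alt. exact Hdist. }
    assert (HV0 : V (x1 0) (x2 0) (x3 0) < rho / C1).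
    { specialize (H2 (x1 0) (x2 0) (x3 0)).
      assert (C2 * Nsq e1 e2 e3 (x1 0) (x2 0) (x3 0) < C2 * (rho / C1 / C2)).
      { apply Rmult_lt_compat_l; auto. }
      replace (C2 * (rho / C1 / C2)) with (rho / C1) in H by (field; lra). lra. }
    split; auto.
    apply (barrier (fun s => V (x1 s) (x2 s) (x3 s))
       (fun s => DV (x1 s) (x2 s) (x3 s) (F1 (x1 s) (x2 s) (x3 s)) (F2 (x1 s) (x2 s) (x3 s)) (F3 (x1 s) (x2 s) (x3 s)))
       T (rho / C1)); auto.
    - intros s Hs HsT. destruct (Hode s Hs HsT) as [D1 [D2 D3]]. apply Hder; auto.
    - intros s Hs HsT Hvs. simpl in Hvs.
      assert (Nsq e1 e2 e3 (x1 s) (x2 s) (x3 s) < r).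
      { specialize (H1 (x1 s) (x2 s) (x3 s)).
        assert (C1 * V (x1 s) (x2 s) (x3 s) < C1 * (rho / C1)) by (apply Rmult_lt_compat_l; auto).
        replace (C1 * (rho / C1)) with rho in H by (field; lra). lra. }
      specialize (H3 _ _ _ H). specialize (Vnn (x1 s) (x2 s) (x3 s)). nra. }
  split.
  - intros eps Heps.
    set (rho := Rmin (eps ^ 2) r).
    assert (Hrho : 0 < rho) by (apply Rmin_pos; nra).
    assert (Hrr : rho <= r) by apply Rmin_r.
    assert (Hre : rho <= eps ^ 2) by apply Rmin_l.
    exists (sqrt (rho / C1 / C2)). split.
    { apply sqrt_lt_R0. apply Rdiv_lt_0_compat; auto. apply Rdiv_lt_0_compat; auto. }
    intros T x1 x2 x3 Hsol Hdist t Ht HtT.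
    destruct (Trap rho Hrho Hrr T x1 x2 x3 Hsol Hdist t Ht HtT) as [Hv Hv0].
    specialize (H1 (x1 t) (x2 t) (x3 t)).
    assert (HN : Nsq e1 e2 e3 (x1 t) (x2 t) (x3 t) < rho).
    { assert (C1 * V (x1 t) (x2 t) (x3 t) < C1 * (rho / C1)) by (apply Rmult_lt_compat_l; lra).
      replace (C1 * (rho / C1)) with rho in H by (field; lra). lra. }
    unfold dist3. rewrite <- (sqrt_pow2 eps) by lra. apply sqrt_lt_1_alt.
    split. apply Nnn. unfold Nsq in HN. lra.
  - exists (sqrt (r / C1 / C2)). split.
    { apply sqrt_lt_R0. apply Rdiv_lt_0_compat; auto. apply Rdiv_lt_0_compat; auto. }
    intros x1 x2 x3 Hsol Hdist.
    set (v := fun s => V (x1 s) (x2 s) (x3 s)).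
    assert (Hin : forall t, 0 <= t -> Nsq e1 e2 e3 (x1 t) (x2 t) (x3 t) < r).
    { intros t Ht.
      destruct (Trap r Hr (Rle_refl r) p_infty x1 x2 x3 Hsol Hdist t Ht I) as [Hv Hv0].
      specialize (H1 (x1 t) (x2 t) (x3 t)).
      assert (C1 * V (x1 t) (x2 t) (x3 t) < C1 * (r / C1)) by (apply Rmult_lt_compat_l; lra).
      replace (C1 * (r / C1)) with r in H by (field; lra). lra. }
    destruct Hsol as [Hode _].
    assert (Hdec := decay v
       (fun s => DV (x1 s) (x2 s) (x3 s) (F1 (x1 s) (x2 s) (x3 s)) (F2 (x1 s) (x2 s) (x3 s)) (F3 (x1 s) (x2 s) (x3 s)))
       c Hc).
    assert (HD : forall t, 1 <= t -> v t * (1 + c * (t - 1)) <= v 1).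
    { apply Hdec.
      - intros s Hs. destruct (Hode s Hs I) as [D1 [D2 D3]]. apply Hder; auto.
      - intros s Hs. apply H3. apply Hin. lra.
      - intros s Hs. apply Vnn. }
    assert (Hv1 : 0 <= v 1) by apply Vnn.
    assert (Key : forall eps, 0 < eps -> exists M, forall t, M < t ->
               Nsq e1 e2 e3 (x1 t) (x2 t) (x3 t) < eps ^ 2).
    { intros eps Heps. exists (1 + C1 * v 1 / (c * eps ^ 2)). intros t Ht.
      assert (He2 : 0 < eps ^ 2) by nra.
      assert (Hq : 0 <= C1 * v 1 / (c * eps ^ 2)).
      { apply Rmult_le_pos. nra. apply Rlt_le, Rinv_0_lt_compat. nra. }
      specialize (HD t ltac:(lra)). specialize (H1 (x1 t) (x2 t) (x3 t)).
      fold (v t) in H1.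
      assert (Hvt : 0 <= v t) by apply Vnn.
      assert (c * (t - 1) > C1 * v 1 / eps ^ 2).
      { assert (c * (t - 1) > c * (C1 * v 1 / (c * eps ^ 2))) by (apply Rmult_gt_compat_l; lra).
        replace (c * (C1 * v 1 / (c * eps ^ 2))) with (C1 * v 1 / eps ^ 2) in H by (field; lra).
        exact H. }
      assert (eps ^ 2 * (c * (t - 1)) > C1 * v 1).
      { assert (eps ^ 2 * (c * (t - 1)) > eps ^ 2 * (C1 * v 1 / eps ^ 2)) by (apply Rmult_gt_compat_l; lra).
        replace (eps ^ 2 * (C1 * v 1 / eps ^ 2)) with (C1 * v 1) in H0 by (field; lra). exact H0. }
      assert (C1 * (v t * (1 + c * (t - 1))) <= C1 * v 1) by (apply Rmult_le_compat_l; lra).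
      assert (Hct : 0 <= c * (t - 1)) by (apply Rmult_le_pos; lra).
      destruct (Rlt_or_le (C1 * v t) (eps ^ 2)) as [Hlt|Hge]; [lra|].
      assert ((C1 * v t) * (c * (t - 1)) >= eps ^ 2 * (c * (t - 1))) by (apply Rmult_ge_compat_r; lra).
      lra. }
    split; [|split]; apply is_lim_spec; intros eps; destruct (Key eps (cond_pos eps)) as [M HM];
      exists M; intros t Ht; apply abs_lt_of_sq; try apply cond_pos;
      specialize (HM t Ht); unfold Nsq in HM;
      generalize (pow2_ge_0 (x1 t - e1)) (pow2_ge_0 (x2 t - e2)) (pow2_ge_0 (x3 t - e3)); lra.
Qed.
Definition gg (m d : R) := 2 * m + d.
Definition bb (m a : R) := 2 * m * a.
Definition DD (m d a k : R) := gg m d + k + a.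
Definition M11 m d a k := 4 * bb m a ^ 2 * k ^ 2 * DD m d a k.
Definition M12 m d a k := - (gg m d * 2 * bb m a * k ^ 2 * DD m d a k).
Definition M13 m d a k := gg m d * (gg m d + k + 2 * a) * 2 * bb m a ^ 2 * k.
Definition M22 m d a k := 2 * k ^ 2 * DD m d a k * (gg m d * a + gg m d ^ 2)
   + 4 * bb m a * k ^ 2 * DD m d a k + 2 * bb m a * k * gg m d * (gg m d + k + 2 * a).
Definition M23 m d a k := - (2 * bb m a * k * DD m d a k * (2 * bb m a + gg m d ^ 2)).
Definition M33 m d a k := 2 * bb m a ^ 2 * (k * DD m d a k * (2 * a - gg m d)
   + gg m d * (gg m d + k + 2 * a) * (gg m d + k)).
Definition W1 (m d a k : R) : R := 16 * m ^ 2 * d * a ^ 2 * k ^ 3 + 16 * m ^ 2 * d ^ 2 * a ^ 2 * k ^ 2 + 32 * m ^ 3 * a ^ 2 * k ^ 3 + 64 * m ^ 3 * d * a ^ 2 * k ^ 2 + 64 * m ^ 4 * a ^ 2 * k ^ 2.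
Definition W2 (m d a k : R) : R := 8 * m * d * a * k ^ 3 + 8 * m * d * a ^ 2 * k ^ 2 + 8 * m * d ^ 2 * a * k ^ 2 + 16 * m ^ 2 * a * k ^ 3 + 16 * m ^ 2 * a ^ 2 * k ^ 2 + 32 * m ^ 2 * d * a * k ^ 2 + 32 * m ^ 3 * a * k ^ 2.
Definition W3 (m d a k : R) : R := 32 * m ^ 2 * a ^ 3 * k ^ 3 + 32 * m ^ 2 * a ^ 4 * k ^ 2 + 64 * m ^ 2 * d * a ^ 3 * k ^ 2 + 32 * m ^ 2 * d * a ^ 4 * k + 32 * m ^ 2 * d ^ 2 * a ^ 3 * k + 64 * m ^ 3 * a ^ 3 * k ^ 2 + 64 * m ^ 3 * d * a ^ 3 * k.
Definition DET (m d a k : R) : R := 512 * m ^ 4 * d * a ^ 6 * k ^ 8 + 1536 * m ^ 4 * d * a ^ 7 * k ^ 7 + 1536 * m ^ 4 * d * a ^ 8 * k ^ 6 + 512 * m ^ 4 * d * a ^ 9 * k ^ 5 + 256 * m ^ 4 * d ^ 2 * a ^ 5 * k ^ 8 + 2560 * m ^ 4 * d ^ 2 * a ^ 6 * k ^ 7 + 4352 * m ^ 4 * d ^ 2 * a ^ 7 * k ^ 6 + 2048 * m ^ 4 * d ^ 2 * a ^ 8 * k ^ 5 + 1024 * m ^ 4 * d ^ 3 * a ^ 5 * k ^ 7 + 4224 * m ^ 4 * d ^ 3 * a ^ 6 * k ^ 6 + 3200 * m ^ 4 * d ^ 3 * a ^ 7 * k ^ 5 + 1536 * m ^ 4 * d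 ^ 4 * a ^ 5 * k ^ 6 + 2688 * m ^ 4 * d ^ 4 * a ^ 6 * k ^ 5 + 256 * m ^ 4 * d ^ 4 * a ^ 7 * k ^ 4 + 1024 * m ^ 4 * d ^ 5 * a ^ 5 * k ^ 5 + 512 * m ^ 4 * d ^ 5 * a ^ 6 * k ^ 4 + 256 * m ^ 4 * d ^ 6 * a ^ 5 * k ^ 4 + 3072 * m ^ 5 * a ^ 6 * k ^ 8 + 9216 * m ^ 5 * a ^ 7 * k ^ 7 + 9216 * m ^ 5 * a ^ 8 * k ^ 6 + 3072 * m ^ 5 * a ^ 9 * k ^ 5 + 1024 * m ^ 5 * d * a ^ 5 * k ^ 8 + 18432 * m ^ 5 * d * a ^ 6 * k ^ 7 + 35840 * m ^ 5 * d * a ^ 7 * k ^ 6 + 20480 * m ^ 5 * d * a ^ 8 * k ^ 5 + 2048 * m ^ 5 * d * a ^ 9 * k ^ 4 + 5632 * m ^ 5 * d ^ 2 * a ^ 5 * k ^ 7 + 36608 * m ^ 5 * d ^ 2 * a ^ 6 * k ^ 6 + 37120 * m ^ 5 * d ^ 2 * a ^ 7 * k ^ 5 + 6144 * m ^ 5 * d ^ 2 * a ^ 8 * k ^ 4 + 11008 * m ^ 5 * d ^ 3 * a ^ 5 * k ^ 6 + 28672 * m ^ 5 * d ^ 3 * a ^ 6 * k ^ 5 + 8704 * m ^ 5 * d ^ 3 * a ^ 7 * k ^ 4 + 9472 * m ^ 5 * d ^ 4 * a ^ 5 * k ^ 5 + 8192 * m ^ 5 * d ^ 4 * a ^ 6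 * k ^ 4 + 1024 * m ^ 5 * d ^ 4 * a ^ 7 * k ^ 3 + 3328 * m ^ 5 * d ^ 5 * a ^ 5 * k ^ 4 + 1024 * m ^ 5 * d ^ 5 * a ^ 6 * k ^ 3 + 256 * m ^ 5 * d ^ 6 * a ^ 5 * k ^ 3 + 1024 * m ^ 6 * a ^ 5 * k ^ 8 + 22528 * m ^ 6 * a ^ 6 * k ^ 7 + 41984 * m ^ 6 * a ^ 7 * k ^ 6 + 20480 * m ^ 6 * a ^ 8 * k ^ 5 + 10240 * m ^ 6 * d * a ^ 5 * k ^ 7 + 83456 * m ^ 6 * d * a ^ 6 * k ^ 6 + 85504 * m ^ 6 * d * a ^ 7 * k ^ 5 + 12288 * m ^ 6 * d * a ^ 8 * k ^ 4 + 29184 * m ^ 6 * d ^ 2 * a ^ 5 * k ^ 6 + 95232 * m ^ 6 * d ^ 2 * a ^ 6 * k ^ 5 + 33792 * m ^ 6 * d ^ 2 * a ^ 7 * k ^ 4 + 34816 * m ^ 6 * d ^ 3 * a ^ 5 * k ^ 5 + 40960 * m ^ 6 * d ^ 3 * a ^ 6 * k ^ 4 + 8192 * m ^ 6 * d ^ 3 * a ^ 7 * k ^ 3 + 17920 * m ^ 6 * d ^ 4 * a ^ 5 * k ^ 4 + 10240 * m ^ 6 * d ^ 4 * a ^ 6 * k ^ 3 + 3072 * m ^ 6 * d ^ 5 * a ^ 5 * k ^ 3 + 6144 * m ^ 7 * a ^ 5 * k ^ 7 + 54272 * m ^ 7 * a ^ 6 * k ^ 6 + 48128 * m ^ 7 *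 a ^ 7 * k ^ 5 + 33792 * m ^ 7 * d * a ^ 5 * k ^ 6 + 122880 * m ^ 7 * d * a ^ 6 * k ^ 5 + 38912 * m ^ 7 * d * a ^ 7 * k ^ 4 + 63488 * m ^ 7 * d ^ 2 * a ^ 5 * k ^ 5 + 90112 * m ^ 7 * d ^ 2 * a ^ 6 * k ^ 4 + 24576 * m ^ 7 * d ^ 2 * a ^ 7 * k ^ 3 + 51200 * m ^ 7 * d ^ 3 * a ^ 5 * k ^ 4 + 40960 * m ^ 7 * d ^ 3 * a ^ 6 * k ^ 3 + 15360 * m ^ 7 * d ^ 4 * a ^ 5 * k ^ 3 + 14336 * m ^ 8 * a ^ 5 * k ^ 6 + 51200 * m ^ 8 * a ^ 6 * k ^ 5 + 8192 * m ^ 8 * a ^ 7 * k ^ 4 + 57344 * m ^ 8 * d * a ^ 5 * k ^ 5 + 90112 * m ^ 8 * d * a ^ 6 * k ^ 4 + 32768 * m ^ 8 * d * a ^ 7 * k ^ 3 + 81920 * m ^ 8 * d ^ 2 * a ^ 5 * k ^ 4 + 81920 * m ^ 8 * d ^ 2 * a ^ 6 * k ^ 3 + 40960 * m ^ 8 * d ^ 3 * a ^ 5 * k ^ 3 + 20480 * m ^ 9 * a ^ 5 * k ^ 5 + 32768 * m ^ 9 * a ^ 6 * k ^ 4 + 16384 * m ^ 9 * a ^ 7 * k ^ 3 + 69632 * m ^ 9 * d * a ^ 5 * k ^ 4 + 81920 * m ^ 9 * d * a ^ 6 * k ^ 3 + 61440 * m ^ 9 * d ^ 2 * a ^ 5 *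 k ^ 3 + 24576 * m ^ 10 * a ^ 5 * k ^ 4 + 32768 * m ^ 10 * a ^ 6 * k ^ 3 + 49152 * m ^ 10 * d * a ^ 5 * k ^ 3 + 16384 * m ^ 11 * a ^ 5 * k ^ 3.
Definition MIN2 (m d a k : R) : R := 32 * m ^ 2 * d * a ^ 3 * k ^ 6 + 64 * m ^ 2 * d * a ^ 4 * k ^ 5 + 32 * m ^ 2 * d * a ^ 5 * k ^ 4 + 16 * m ^ 2 * d ^ 2 * a ^ 2 * k ^ 6 + 96 * m ^ 2 * d ^ 2 * a ^ 3 * k ^ 5 + 80 * m ^ 2 * d ^ 2 * a ^ 4 * k ^ 4 + 32 * m ^ 2 * d ^ 3 * a ^ 2 * k ^ 5 + 64 * m ^ 2 * d ^ 3 * a ^ 3 * k ^ 4 + 16 * m ^ 2 * d ^ 4 * a ^ 2 * k ^ 4 + 192 * m ^ 3 * a ^ 3 * k ^ 6 + 384 * m ^ 3 * a ^ 4 * k ^ 5 + 192 * m ^ 3 * a ^ 5 * k ^ 4 + 64 * m ^ 3 * d * a ^ 2 * k ^ 6 + 704 * m ^ 3 * d * a ^ 3 * k ^ 5 + 768 * m ^ 3 * d * a ^ 4 * k ^ 4 + 128 * m ^ 3 * d * a ^ 5 * k ^ 3 + 192 * m ^ 3 * d ^ 2 * a ^ 2 * k ^ 5 + 640 * m ^ 3 * d ^ 2 * a ^ 3 * k ^ 4 + 192 * m ^ 3 * d ^ 2 * a ^ 4 * k ^ 3 + 128 * m ^ 3 * d ^ 3 * a ^ 2 * k ^ 4 +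 64 * m ^ 3 * d ^ 3 * a ^ 3 * k ^ 3 + 64 * m ^ 4 * a ^ 2 * k ^ 6 + 1024 * m ^ 4 * a ^ 3 * k ^ 5 + 1216 * m ^ 4 * a ^ 4 * k ^ 4 + 256 * m ^ 4 * a ^ 5 * k ^ 3 + 384 * m ^ 4 * d * a ^ 2 * k ^ 5 + 1792 * m ^ 4 * d * a ^ 3 * k ^ 4 + 768 * m ^ 4 * d * a ^ 4 * k ^ 3 + 384 * m ^ 4 * d ^ 2 * a ^ 2 * k ^ 4 + 384 * m ^ 4 * d ^ 2 * a ^ 3 * k ^ 3 + 256 * m ^ 5 * a ^ 2 * k ^ 5 + 1536 * m ^ 5 * a ^ 3 * k ^ 4 + 768 * m ^ 5 * a ^ 4 * k ^ 3 + 512 * m ^ 5 * d * a ^ 2 * k ^ 4 + 768 * m ^ 5 * d * a ^ 3 * k ^ 3 + 256 * m ^ 6 * a ^ 2 * k ^ 4 + 512 * m ^ 6 * a ^ 3 * k ^ 3.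
Definition M11E (m d a k : R) : R := 16 * m ^ 2 * a ^ 2 * k ^ 3 + 16 * m ^ 2 * a ^ 3 * k ^ 2 + 16 * m ^ 2 * d * a ^ 2 * k ^ 2 + 32 * m ^ 3 * a ^ 2 * k ^ 2.

Lemma deriv_id m d a k x s z :
  2 * ((M11 m d a k * x + M12 m d a k * s + M13 m d a k * z) * (- gg m d * x + s - a * z)
     + (M12 m d a k * x + M22 m d a k * s + M23 m d a k * z) * (- bb m a * z)
     + (M13 m d a k * x + M23 m d a k * s + M33 m d a k * z) * (k * x - k * z))
  = - (W1 m d a k * x ^ 2 + W2 m d a k * s ^ 2 + W3 m d a k * z ^ 2).
Proof. unfold M11, M12, M13, M22, M23, M33, W1, W2, W3, DD, gg, bb. ring. Qed.

Ltac pos_nn := match goal with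
  | |- 0 <= _ + _ => apply Rplus_le_le_0_compat; pos_nn
  | |- 0 <= _ * _ => apply Rmult_le_pos; pos_nn
  | |- 0 <= _ ^ _ => apply pow_le; pos_nn
  | |- _ => lra
  end.
Ltac pos_strict := match goal with
  | |- 0 < _ + _ => first [ apply Rplus_le_lt_0_compat; [pos_nn | pos_strict]
                           | apply Rplus_lt_le_0_compat; [pos_strict | pos_nn] ]
  | |- 0 < _ * _ => apply Rmult_lt_0_compat; pos_strict
  | |- 0 < _ ^ _ => apply pow_lt; pos_strict
  | |- _ => lra
  end.

Lemma alg_pos m d a k : 0 < m -> 0 <= d -> 0 < a -> 0 < k ->
  0 < W1 m d a k /\ 0 < W2 m d a k /\ 0 < W3 m d a k /\ 0 < DET m d a k /\
  0 < MIN2 m d a k /\ 0 < M11E m d a k.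
Proof.
  intros Hm Hd Ha Hk. unfold W1, W2, W3, DET, MIN2, M11E.
  repeat split; pos_strict.
Qed.

Lemma M11_eq m d a k : M11 m d a k = M11E m d a k.
Proof. unfold M11, M11E, DD, gg, bb. ring. Qed.
Lemma MIN2_eq m d a k : M11 m d a k * M22 m d a k - M12 m d a k ^ 2 = MIN2 m d a k.
Proof. unfold M11, M12, M22, MIN2, DD, gg, bb. ring. Qed.
Lemma DET_eq m d a k :
  M11 m d a k * (M22 m d a k * M33 m d a k - M23 m d a k ^ 2)
  - M12 m d a k * (M12 m d a k * M33 m d a k - M23 m d a k * M13 m d a k)
  + M13 m d a k * (M12 m d a k * M23 m d a k - M22 m d a k * M13 m d a k) = DET m d a k.
Proof. unfold M11, M12, M13, M22, M23, M33, DET, DD, gg, bb. ring. Qed.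
Definition qf (a11 a12 a13 a22 a23 a33 x y z : R) :=
  a11 * x * x + 2 * a12 * x * y + 2 * a13 * x * z + a22 * y * y + 2 * a23 * y * z + a33 * z * z.

Lemma le_div p u v : 0 < p -> p * u <= v -> u <= v / p.
Proof.
  intros Hp H. apply Rmult_le_reg_l with p; auto.
  replace (p * (v / p)) with v by (field; lra). exact H.
Qed.

Lemma sq2 p q : (p + q) ^ 2 <= 2 * p ^ 2 + 2 * q ^ 2.
Proof. generalize (pow2_ge_0 (p - q)). intro. nra. Qed.

Lemma sq3 p q r : (p + q + r) ^ 2 <= 3 * (p ^ 2 + q ^ 2 + r ^ 2).
Proof. generalize (pow2_ge_0 (p - q)) (pow2_ge_0 (q - r)) (pow2_ge_0 (p - r)). intros. nra. Qed.

Lemma cross_le p x y : 2 * p * x * y <= Rabs p * (x ^ 2 + y ^ 2).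
Proof.
  destruct (Rle_or_lt 0 p) as [H|H].
  - rewrite Rabs_right by lra. generalize (pow2_ge_0 (x - y)). intro.
    assert (0 <= p * (x - y) ^ 2) by (apply Rmult_le_pos; auto). nra.
  - rewrite Rabs_left by lra. generalize (pow2_ge_0 (x + y)). intro.
    assert (0 <= - p * (x + y) ^ 2) by (apply Rmult_le_pos; lra). nra.
Qed.

Lemma qf_upper a11 a12 a13 a22 a23 a33 : exists K, 0 < K /\ forall x y z,
  qf a11 a12 a13 a22 a23 a33 x y z <= K * (x ^ 2 + y ^ 2 + z ^ 2).
Proof.
  exists (1 + Rabs a11 + Rabs a22 + Rabs a33 + Rabs a12 + Rabs a13 + Rabs a23).
  split. generalize (Rabs_pos a11) (Rabs_pos a22) (Rabs_pos a33) (Rabs_pos a12) (Rabs_pos a13) (Rabs_pos a23). lra.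
  intros x y z. unfold qf.
  generalize (cross_le a12 x y) (cross_le a13 x z) (cross_le a23 y z).
  assert (a11 * x * x <= Rabs a11 * x ^ 2).
  { replace (a11 * x * x) with (a11 * x ^ 2) by ring. apply Rmult_le_compat_r. apply pow2_ge_0. apply Rle_abs. }
  assert (a22 * y * y <= Rabs a22 * y ^ 2).
  { replace (a22 * y * y) with (a22 * y ^ 2) by ring. apply Rmult_le_compat_r. apply pow2_ge_0. apply Rle_abs. }
  assert (a33 * z * z <= Rabs a33 * z ^ 2).
  { replace (a33 * z * z) with (a33 * z ^ 2) by ring. apply Rmult_le_compat_r. apply pow2_ge_0. apply Rle_abs. }
  generalize (pow2_ge_0 x) (pow2_ge_0 y) (pow2_ge_0 z).
  generalize (Rabs_pos a11) (Rabs_pos a22) (Rabs_pos a33) (Rabs_pos a12) (Rabs_pos a13) (Rabs_pos a23).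
  intros.
  assert (Rabs a11 * x ^ 2 + Rabs a22 * y ^ 2 + Rabs a33 * z ^ 2 + Rabs a12 * (x ^ 2 + y ^ 2)
    + Rabs a13 * (x ^ 2 + z ^ 2) + Rabs a23 * (y ^ 2 + z ^ 2)
    <= (1 + Rabs a11 + Rabs a22 + Rabs a33 + Rabs a12 + Rabs a13 + Rabs a23) * (x ^ 2 + y ^ 2 + z ^ 2)).
  { set (S := x ^ 2 + y ^ 2 + z ^ 2).
    assert (Rabs a11 * x ^ 2 <= Rabs a11 * S) by (apply Rmult_le_compat_l; unfold S; lra).
    assert (Rabs a22 * y ^ 2 <= Rabs a22 * S) by (apply Rmult_le_compat_l; unfold S; lra).
    assert (Rabs a33 * z ^ 2 <= Rabs a33 * S) by (apply Rmult_le_compat_l; unfold S; lra).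
    assert (Rabs a12 * (x ^ 2 + y ^ 2) <= Rabs a12 * S) by (apply Rmult_le_compat_l; unfold S; lra).
    assert (Rabs a13 * (x ^ 2 + z ^ 2) <= Rabs a13 * S) by (apply Rmult_le_compat_l; unfold S; lra).
    assert (Rabs a23 * (y ^ 2 + z ^ 2) <= Rabs a23 * S) by (apply Rmult_le_compat_l; unfold S; lra).
    assert (0 <= S) by (unfold S; lra). lra. }
  lra.
Qed.

Lemma qf_lower a11 a12 a13 a22 a23 a33 :
  0 < a11 -> 0 < a11 * a22 - a12 ^ 2 ->
  0 < a11 * (a22 * a33 - a23 ^ 2) - a12 * (a12 * a33 - a23 * a13) + a13 * (a12 * a23 - a22 * a13) ->
  exists K, 0 < K /\ forall x y z,
  x ^ 2 + y ^ 2 + z ^ 2 <= K * qf a11 a12 a13 a22 a23 a33 x y z.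
Proof.
  intros H1 H2 H3.
  set (m2 := a11 * a22 - a12 ^ 2) in *.
  set (Dt := a11 * (a22 * a33 - a23 ^ 2) - a12 * (a12 * a33 - a23 * a13) + a13 * (a12 * a23 - a22 * a13)) in *.
  set (n := a11 * a23 - a12 * a13).
  set (Kz := m2 / Dt).
  set (Ky := (2 * m2 * a11 + 2 * n ^ 2 * Kz) / m2 ^ 2).
  set (Kx := 3 * (a11 + a12 ^ 2 * Ky + a13 ^ 2 * Kz) / a11 ^ 2).
  assert (HKz : 0 < Kz) by (unfold Kz; apply Rdiv_lt_0_compat; auto).
  assert (HKy : 0 < Ky).
  { unfold Ky. apply Rdiv_lt_0_compat. 2: apply pow_lt; auto.
    assert (0 <= 2 * n ^ 2 * Kz) by (apply Rmult_le_pos; [generalize (pow2_ge_0 n); lra | lra]).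
    assert (0 < 2 * m2 * a11) by (apply Rmult_lt_0_compat; lra). lra. }
  assert (HKx : 0 < Kx).
  { unfold Kx. apply Rdiv_lt_0_compat. 2: apply pow_lt; auto.
    assert (0 <= a12 ^ 2 * Ky) by (apply Rmult_le_pos; [apply pow2_ge_0 | lra]).
    assert (0 <= a13 ^ 2 * Kz) by (apply Rmult_le_pos; [apply pow2_ge_0 | lra]). lra. }
  exists (Kx + Ky + Kz). split. lra.
  intros x y z.
  set (Q := qf a11 a12 a13 a22 a23 a33 x y z).
  set (L := a11 * x + a12 * y + a13 * z).
  set (wv := m2 * y + n * z).
  assert (Hid : m2 * (a11 * Q) = m2 * L ^ 2 + wv ^ 2 + a11 * Dt * z ^ 2).
  { unfold Q, qf, L, wv, m2, n, Dt. ring. }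
  assert (HL := pow2_ge_0 L). assert (Hw := pow2_ge_0 wv). assert (Hz := pow2_ge_0 z).
  assert (Ha1D : 0 < a11 * Dt) by (apply Rmult_lt_0_compat; auto).
  assert (Hzz : 0 <= a11 * Dt * z ^ 2) by (apply Rmult_le_pos; lra).
  assert (HmL : 0 <= m2 * L ^ 2) by (apply Rmult_le_pos; lra).
  assert (HQ : 0 <= Q).
  { assert (0 <= m2 * (a11 * Q)) by lra.
    assert (0 < m2 * a11) by (apply Rmult_lt_0_compat; auto).
    destruct (Rle_or_lt 0 Q); auto.
    assert (m2 * (a11 * Q) = (m2 * a11) * Q) by ring.
    assert ((m2 * a11) * Q < 0) by (apply Rmult_lt_0_compat_l_neg; auto) || nra. nra. }
  assert (Bz : z ^ 2 <= Kz * Q).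
  { unfold Kz. replace (m2 / Dt * Q) with ((m2 * a11 * Q) / (a11 * Dt)) by (field; lra).
    apply le_div; auto. lra. }
  assert (Bw : wv ^ 2 <= m2 * a11 * Q) by lra.
  assert (BL : L ^ 2 <= a11 * Q).
  { apply Rmult_le_reg_l with m2; auto. lra. }
  assert (By : y ^ 2 <= Ky * Q).
  { assert (Hyy : m2 ^ 2 * y ^ 2 <= 2 * m2 * a11 * Q + 2 * n ^ 2 * (Kz * Q)).
    { replace (m2 ^ 2 * y ^ 2) with ((wv + (- n * z)) ^ 2) by (unfold wv; ring).
      eapply Rle_trans. apply sq2.
      assert (n ^ 2 * z ^ 2 <= n ^ 2 * (Kz * Q)) by (apply Rmult_le_compat_l; [apply pow2_ge_0 | lra]).
      replace ((- n * z) ^ 2) with (n ^ 2 * z ^ 2) by ring. lra. }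
    unfold Ky. replace ((2 * m2 * a11 + 2 * n ^ 2 * Kz) / m2 ^ 2 * Q)
      with ((2 * m2 * a11 * Q + 2 * n ^ 2 * (Kz * Q)) / m2 ^ 2) by (field; lra).
    apply le_div. apply pow_lt; auto. exact Hyy. }
  assert (Bx : x ^ 2 <= Kx * Q).
  { assert (Hxx : a11 ^ 2 * x ^ 2 <= 3 * (a11 * Q + a12 ^ 2 * (Ky * Q) + a13 ^ 2 * (Kz * Q))).
    { replace (a11 ^ 2 * x ^ 2) with ((L + (- a12 * y) + (- a13 * z)) ^ 2) by (unfold L; ring).
      eapply Rle_trans. apply sq3.
      assert (a12 ^ 2 * y ^ 2 <= a12 ^ 2 * (Ky * Q)) by (apply Rmult_le_compat_l; [apply pow2_ge_0 | lra]).
      assert (a13 ^ 2 * z ^ 2 <= a13 ^ 2 * (Kz * Q)) by (apply Rmult_le_compat_l; [apply pow2_ge_0 | lra]).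
      replace ((- a12 * y) ^ 2) with (a12 ^ 2 * y ^ 2) by ring.
      replace ((- a13 * z) ^ 2) with (a13 ^ 2 * z ^ 2) by ring. lra. }
    unfold Kx. replace (3 * (a11 + a12 ^ 2 * Ky + a13 ^ 2 * Kz) / a11 ^ 2 * Q)
      with (3 * (a11 * Q + a12 ^ 2 * (Ky * Q) + a13 ^ 2 * (Kz * Q)) / a11 ^ 2) by (field; lra).
    apply le_div. apply pow_lt; auto. exact Hxx. }
  lra.
Qed.
Lemma is_derive_eq (f : R -> R) (x l l' : R) : is_derive f x l -> l = l' -> is_derive f x l'.
Proof. intros H E. subst. exact H. Qed.

Lemma deriv_rem (f : R -> R) (x fp : R) : is_derive f x fp ->
  forall eps, 0 < eps -> exists del, 0 < del /\ forall z, Rabs z < del ->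
    Rabs (f (x + z) - f x - fp * z) <= eps * Rabs z.
Proof.
  intros H eps He. apply is_derive_Reals in H.
  destruct (H eps He) as [del Hd]. exists del. split. apply cond_pos.
  intros z Hz. destruct (Req_dec z 0) as [Hz0|Hz0].
  - subst. replace (x + 0) with x by ring. replace (f x - f x - fp * 0) with 0 by ring.
    rewrite Rabs_R0. lra.
  - specialize (Hd z Hz0 Hz).
    replace (f (x + z) - f x - fp * z) with (((f (x + z) - f x) / z - fp) * z) by (field; auto).
    rewrite Rabs_mult. apply Rmult_le_compat_r. apply Rabs_pos. lra.
Qed.

Lemma ffun_derive (a w da dw : R -> R) l q x :
  0 < a x -> 0 < w x -> is_derive a x (da x) -> is_derive w x (dw x) ->
  0 <= q < 1 -> 0 <= l ->
  is_derive (ffun a w l q) x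
    (((da x * w x - a x * dw x) / (a x + w x) ^ 2) *
     (- (1 - q) * l / (cfun (pfun a w x) q + l) ^ 2)).
Proof.
  intros Ha Hw Hda Hdw Hq Hl.
  assert (Hp0 : 0 < pfun a w x < 1).
  { unfold pfun. split. apply Rdiv_lt_0_compat; lra.
    apply Rmult_lt_reg_r with (a x + w x). lra. field_simplify; lra. }
  assert (Hc0 : 0 < cfun (pfun a w x) q).
  { unfold cfun. assert (pfun a w x * (1 - q) < 1) by nra. lra. }
  assert (Hsum : is_derive (fun y => a y + w y) x (da x + dw x)).
  { apply (is_derive_plus a w x (da x) (dw x) Hda Hdw). }
  assert (Hp : is_derive (pfun a w) x ((da x * w x - a x * dw x) / (a x + w x) ^ 2)).
  { eapply is_derive_eq. apply (is_derive_div a (fun y => a y + w y) x (da x) (da x + dw x) Hda Hsum). lra.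
    field. lra. }
  assert (Hout : is_derive (fun p => hfun l p q) (pfun a w x)
            (- (1 - q) * l / (cfun (pfun a w x) q + l) ^ 2)).
  { unfold hfun, cfun. unfold cfun in Hc0. auto_derive. lra. field. lra. }
  generalize (is_derive_comp (fun p => hfun l p q) (pfun a w) x _ _ Hout Hp).
  intro H. exact H.
Qed.
Lemma Dadd (f g : R -> R) (t df dg : R) : is_derive f t df -> is_derive g t dg ->
  is_derive (fun s => f s + g s) t (df + dg).
Proof. intros. apply (is_derive_plus f g t df dg); auto. Qed.
Lemma Dsub (f g : R -> R) (t df dg : R) : is_derive f t df -> is_derive g t dg ->
  is_derive (fun s => f s - g s) t (df - dg).
Proof. intros. apply (is_derive_minus f g t df dg); auto. Qed.
Lemma Dmul (f g : R -> R) (t df dg : R) : is_derive f t df -> is_derive g t dg ->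
  is_derive (fun s => f s * g s) t (df * g t + f t * dg).
Proof. intros. apply (is_derive_mult f g t df dg); auto. intros; apply Rmult_comm. Qed.
Lemma Dconst (c t : R) : is_derive (fun _ => c) t 0.
Proof. apply (is_derive_const c t). Qed.

Ltac dtac := repeat match goal with
  | |- is_derive (fun s => _ + _) _ _ => apply Dadd
  | |- is_derive (fun s => _ - _) _ _ => apply Dsub
  | |- is_derive (fun s => _ * _) _ _ => apply Dmul
  | |- is_derive (fun _ => ?c) _ _ => apply Dconst
  | H : is_derive ?f ?t _ |- is_derive ?f ?t _ => exact H
  | H : is_derive ?f ?t _ |- is_derive (fun s => ?f s) ?t _ => exact H
  end.

Lemma qf_derive a11 a12 a13 a22 a23 a33 (u1 u2 u3 : R -> R) (t d1 d2 d3 : R) :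
  is_derive u1 t d1 -> is_derive u2 t d2 -> is_derive u3 t d3 ->
  is_derive (fun s => qf a11 a12 a13 a22 a23 a33 (u1 s) (u2 s) (u3 s)) t
   (2 * ((a11 * u1 t + a12 * u2 t + a13 * u3 t) * d1 + (a12 * u1 t + a22 * u2 t + a23 * u3 t) * d2
        + (a13 * u1 t + a23 * u2 t + a33 * u3 t) * d3)).
Proof.
  intros H1 H2 H3. unfold qf. eapply is_derive_eq. dtac. cbv beta. ring.
Qed.

Section FL.
Context {F : (R -> Prop) -> Prop} {FF : Filter F}.
Lemma Ladd (f g : R -> R) lf lg : filterlim f F (locally lf) -> filterlim g F (locally lg) ->
  filterlim (fun s => f s + g s) F (locally (lf + lg)).
Proof. intros. eapply filterlim_comp_2; eauto. apply (filterlim_plus lf lg). Qed.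
Lemma Lmul (f g : R -> R) lf lg : filterlim f F (locally lf) -> filterlim g F (locally lg) ->
  filterlim (fun s => f s * g s) F (locally (lf * lg)).
Proof. intros. eapply filterlim_comp_2; eauto. apply (filterlim_mult lf lg). Qed.
Lemma Lconst (c : R) : filterlim (fun _ => c) F (locally c).
Proof. apply filterlim_const. Qed.
Lemma Lsub (f g : R -> R) lf lg : filterlim f F (locally lf) -> filterlim g F (locally lg) ->
  filterlim (fun s => f s - g s) F (locally (lf - lg)).
Proof.
  intros. unfold Rminus.
  apply Ladd; auto. replace (- lg) with ((-1) * lg) by ring.
  apply (filterlim_ext (fun s => (-1) * g s)). intros; ring.
  apply Lmul; auto. apply Lconst.
Qed.
End FL.

Ltac ltac_ := repeat match goal with
  | |- filterlim (fun s => _ + _) _ _ => apply Ladd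
  | |- filterlim (fun s => _ - _) _ _ => apply Lsub
  | |- filterlim (fun s => _ * _) _ _ => apply Lmul
  | |- filterlim (fun _ => ?c) _ _ => apply Lconst
  | H : filterlim ?f ?F _ |- filterlim ?f ?F _ => exact H
  | H : filterlim ?f ?F _ |- filterlim (fun s => ?f s) ?F _ => exact H
  end.

Lemma qf_lim {F : (R -> Prop) -> Prop} {FF : Filter F} a11 a12 a13 a22 a23 a33 (u1 u2 u3 : R -> R) l1 l2 l3 :
  filterlim u1 F (locally l1) -> filterlim u2 F (locally l2) -> filterlim u3 F (locally l3) ->
  filterlim (fun s => qf a11 a12 a13 a22 a23 a33 (u1 s) (u2 s) (u3 s)) F
    (locally (qf a11 a12 a13 a22 a23 a33 l1 l2 l3)).
Proof. intros. unfold qf. ltac_. Qed.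
Lemma row_bound p q r x s z Mb : Rabs p <= Mb -> Rabs q <= Mb -> Rabs r <= Mb ->
  Rabs (p * x + q * s + r * z) <= Mb * (Rabs x + Rabs s + Rabs z).
Proof.
  intros Hp Hq Hr.
  eapply Rle_trans. apply Rabs_triang. eapply Rle_trans. apply Rplus_le_compat_r. apply Rabs_triang.
  rewrite !Rabs_mult.
  assert (Rabs p * Rabs x <= Mb * Rabs x) by (apply Rmult_le_compat_r; [apply Rabs_pos|auto]).
  assert (Rabs q * Rabs s <= Mb * Rabs s) by (apply Rmult_le_compat_r; [apply Rabs_pos|auto]).
  assert (Rabs r * Rabs z <= Mb * Rabs z) by (apply Rmult_le_compat_r; [apply Rabs_pos|auto]).
  lra.
Qed.

Lemma abs_sq x : Rabs x ^ 2 = x ^ 2.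
Proof. rewrite <- Rsqr_pow2, <- Rsqr_pow2. symmetry. apply Rsqr_abs. Qed.

Lemma est_core W1 W2 W3 Wmin Mb Kr th x s z m1 m2 R1 R2 :
  0 < Wmin -> Wmin <= W1 -> Wmin <= W2 -> Wmin <= W3 -> 0 < Mb -> 0 < Kr -> 0 < th ->
  th <= Wmin / (16 * Mb * Kr) ->
  Rabs m1 <= Mb * (Rabs x + Rabs s + Rabs z) -> Rabs m2 <= Mb * (Rabs x + Rabs s + Rabs z) ->
  Rabs R1 <= Kr * th * Rabs z -> Rabs R2 <= Kr * th * Rabs z ->
  - (W1 * x ^ 2 + W2 * s ^ 2 + W3 * z ^ 2) + 2 * (m1 * R1 + m2 * R2)
    <= - (Wmin / 2) * (x ^ 2 + s ^ 2 + z ^ 2).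
Proof.
  intros HW H1 H2 H3 HM HK Ht Hth Hm1 Hm2 HR1 HR2.
  set (S := Rabs x + Rabs s + Rabs z).
  assert (HS : 0 <= S) by (unfold S; generalize (Rabs_pos x) (Rabs_pos s) (Rabs_pos z); lra).
  assert (Hz := Rabs_pos z).
  assert (E1 : m1 * R1 <= Mb * S * (Kr * th * Rabs z)).
  { eapply Rle_trans. apply Rle_abs. rewrite Rabs_mult.
    apply Rmult_le_compat; auto; apply Rabs_pos. }
  assert (E2 : m2 * R2 <= Mb * S * (Kr * th * Rabs z)).
  { eapply Rle_trans. apply Rle_abs. rewrite Rabs_mult.
    apply Rmult_le_compat; auto; apply Rabs_pos. }
  assert (HSz : S * Rabs z <= 2 * (x ^ 2 + s ^ 2 + z ^ 2)).
  { unfold S. rewrite <- (abs_sq x), <- (abs_sq s), <- (abs_sq z).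
    generalize (Rabs_pos x) (Rabs_pos s) (Rabs_pos z). intros.
    generalize (pow2_ge_0 (Rabs x - Rabs z)) (pow2_ge_0 (Rabs s - Rabs z)). intros. nra. }
  assert (Hprod : Mb * S * (Kr * th * Rabs z) = (Mb * Kr * th) * (S * Rabs z)) by ring.
  assert (HMKt : Mb * Kr * th <= Wmin / 16).
  { assert (0 < Mb * Kr) by (apply Rmult_lt_0_compat; lra).
    assert (Mb * Kr * th <= Mb * Kr * (Wmin / (16 * Mb * Kr))) by (apply Rmult_le_compat_l; lra).
    replace (Mb * Kr * (Wmin / (16 * Mb * Kr))) with (Wmin / 16) in H0 by (field; lra). exact H0. }
  assert (HSz0 : 0 <= S * Rabs z) by (apply Rmult_le_pos; auto).
  assert (HMKt0 : 0 <= Mb * Kr * th) by (apply Rmult_le_pos; [apply Rmult_le_pos|]; lra).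
  assert (Hb : (Mb * Kr * th) * (S * Rabs z) <= (Wmin / 16) * (2 * (x ^ 2 + s ^ 2 + z ^ 2))).
  { apply Rmult_le_compat; auto. }
  assert (W1 * x ^ 2 >= Wmin * x ^ 2) by (apply Rle_ge, Rmult_le_compat_r; [apply pow2_ge_0|auto]).
  assert (W2 * s ^ 2 >= Wmin * s ^ 2) by (apply Rle_ge, Rmult_le_compat_r; [apply pow2_ge_0|auto]).
  assert (W3 * z ^ 2 >= Wmin * z ^ 2) by (apply Rle_ge, Rmult_le_compat_r; [apply pow2_ge_0|auto]).
  lra.
Qed.
Lemma T_bound (eta phi I Y dd th Z : R) : 0 <= I -> 0 <= dd -> 0 < th -> th <= 1 ->
  Rabs eta <= th * Rabs Z -> phi = eta - dd * Z -> Rabs Y <= th ->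
  Rabs (eta * I + phi * Y) <= th * Rabs Z * (I + 1 + dd).
Proof.
  intros HI Hdd Ht Ht1 He Hphi HY.
  assert (Hph : Rabs phi <= (th + dd) * Rabs Z).
  { rewrite Hphi. eapply Rle_trans. apply Rabs_triang. rewrite Rabs_Ropp, Rabs_mult, (Rabs_right dd) by lra. lra. }
  eapply Rle_trans. apply Rabs_triang. rewrite !Rabs_mult. rewrite (Rabs_right I) by lra.
  assert (Rabs eta * I <= th * Rabs Z * I) by (apply Rmult_le_compat_r; auto).
  assert (Rabs phi * Rabs Y <= (th + dd) * Rabs Z * th).
  { apply Rmult_le_compat; auto; apply Rabs_pos. }
  assert ((th + dd) * Rabs Z * th <= th * Rabs Z * (1 + dd)).
  { assert (HZ := Rabs_pos Z).
    assert (0 <= dd * Rabs Z * (1 - th)) by (apply Rmult_le_pos; [apply Rmult_le_pos|]; lra).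
    assert (0 <= th * Rabs Z * (1 - th)) by (apply Rmult_le_pos; [apply Rmult_le_pos|]; lra).
    nra. }
  lra.
Qed.

Lemma R_bounds (K1 K2 mu A IMs IHs dd th X Y Z eta phi : R) :
  0 <= K1 -> 0 <= K2 -> 0 <= mu -> 0 <= A -> 0 <= IMs -> 0 <= IHs -> 0 <= dd -> 0 < th -> th <= 1 ->
  Rabs eta <= th * Rabs Z -> phi = eta - dd * Z -> Rabs X <= th -> Rabs Y <= th ->
  let Kr := (1 + mu) * K1 * (IMs + 1 + dd) + A * K2 * (IHs + 1 + dd) in
  Rabs (K1 * (eta * IMs + phi * Y)) <= Kr * th * Rabs Z /\
  Rabs (mu * (K1 * (eta * IMs + phi * Y)) + A * (K2 * (eta * IHs + phi * X))) <= Kr * th * Rabs Z.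
Proof.
  intros HK1 HK2 Hmu HA HIM HIH Hdd Ht Ht1 He Hphi HX HY Kr.
  assert (T1 := T_bound eta phi IMs Y dd th Z HIM Hdd Ht Ht1 He Hphi HY).
  assert (T2 := T_bound eta phi IHs X dd th Z HIH Hdd Ht Ht1 He Hphi HX).
  assert (HZ := Rabs_pos Z).
  set (t1 := th * Rabs Z * (IMs + 1 + dd)) in *.
  set (t2 := th * Rabs Z * (IHs + 1 + dd)) in *.
  assert (Ht1' : 0 <= t1) by (unfold t1; repeat apply Rmult_le_pos; lra).
  assert (Ht2' : 0 <= t2) by (unfold t2; repeat apply Rmult_le_pos; lra).
  assert (B1 : Rabs (K1 * (eta * IMs + phi * Y)) <= K1 * t1).
  { rewrite Rabs_mult, (Rabs_right K1) by lra. apply Rmult_le_compat_l; auto. }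
  assert (B2 : Rabs (K2 * (eta * IHs + phi * X)) <= K2 * t2).
  { rewrite Rabs_mult, (Rabs_right K2) by lra. apply Rmult_le_compat_l; auto. }
  assert (EKr : Kr * th * Rabs Z = (1 + mu) * (K1 * t1) + A * (K2 * t2)) by (unfold Kr, t1, t2; ring).
  assert (0 <= K1 * t1) by (apply Rmult_le_pos; auto).
  assert (0 <= K2 * t2) by (apply Rmult_le_pos; auto).
  assert (0 <= mu * (K1 * t1)) by (apply Rmult_le_pos; auto).
  assert (0 <= A * (K2 * t2)) by (apply Rmult_le_pos; auto).
  split.
  - rewrite EKr. lra.
  - rewrite EKr. eapply Rle_trans. apply Rabs_triang. rewrite !Rabs_mult.
    rewrite (Rabs_right mu) by lra. rewrite (Rabs_right A) by lra.
    rewrite <- !Rabs_mult.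
    assert (mu * Rabs (K1 * (eta * IMs + phi * Y)) <= mu * (K1 * t1)) by (apply Rmult_le_compat_l; auto).
    assert (A * Rabs (K2 * (eta * IHs + phi * X)) <= A * (K2 * t2)) by (apply Rmult_le_compat_l; auto).
    lra.
Qed.

Lemma tr1 mu A X Y Z : 0 < A ->
  X ^ 2 + Y ^ 2 + Z ^ 2 <= (1 + (2 + 2 * mu ^ 2) / A ^ 2) * (X ^ 2 + (mu * X + A * Y) ^ 2 + Z ^ 2).
Proof.
  intros HA. set (s := mu * X + A * Y).
  assert (HY : A ^ 2 * Y ^ 2 <= 2 * s ^ 2 + 2 * mu ^ 2 * X ^ 2).
  { replace (A ^ 2 * Y ^ 2) with ((s + (- mu * X)) ^ 2) by (unfold s; ring).
    eapply Rle_trans. apply sq2. replace ((- mu * X) ^ 2) with (mu ^ 2 * X ^ 2) by ring. lra. }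
  assert (HY' : Y ^ 2 <= (2 + 2 * mu ^ 2) / A ^ 2 * (X ^ 2 + s ^ 2 + Z ^ 2)).
  { replace ((2 + 2 * mu ^ 2) / A ^ 2 * (X ^ 2 + s ^ 2 + Z ^ 2))
      with ((2 + 2 * mu ^ 2) * (X ^ 2 + s ^ 2 + Z ^ 2) / A ^ 2) by (field; lra).
    apply le_div. apply pow_lt; auto.
    generalize (pow2_ge_0 X) (pow2_ge_0 s) (pow2_ge_0 Z) (pow2_ge_0 mu). intros.
    assert (mu ^ 2 * X ^ 2 <= mu ^ 2 * (X ^ 2 + s ^ 2 + Z ^ 2)) by (apply Rmult_le_compat_l; lra).
    lra. }
  generalize (pow2_ge_0 X) (pow2_ge_0 s) (pow2_ge_0 Z). intros. lra.
Qed.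

Lemma tr2 mu A X Y Z :
  X ^ 2 + (mu * X + A * Y) ^ 2 + Z ^ 2 <= (1 + 2 * mu ^ 2 + 2 * A ^ 2) * (X ^ 2 + Y ^ 2 + Z ^ 2).
Proof.
  generalize (sq2 (mu * X) (A * Y)). intro H.
  replace ((mu * X) ^ 2) with (mu ^ 2 * X ^ 2) in H by ring.
  replace ((A * Y) ^ 2) with (A ^ 2 * Y ^ 2) in H by ring.
  generalize (pow2_ge_0 X) (pow2_ge_0 Y) (pow2_ge_0 Z) (pow2_ge_0 mu) (pow2_ge_0 A). intros.
  assert (mu ^ 2 * X ^ 2 <= mu ^ 2 * (X ^ 2 + Y ^ 2 + Z ^ 2)) by (apply Rmult_le_compat_l; lra).
  assert (A ^ 2 * Y ^ 2 <= A ^ 2 * (X ^ 2 + Y ^ 2 + Z ^ 2)) by (apply Rmult_le_compat_l; lra).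
  lra.
Qed.
Theorem mainTheorem15
  (a w da dw : R -> R)
  (* Assumption (A) on [0,oo) *)
  (Ha_pos : forall x, 0 <= x -> 0 < a x)
  (Hw_pos : forall x, 0 <= x -> 0 < w x)
  (Ha_der : forall x, 0 <= x -> is_derive a x (da x))
  (Hw_der : forall x, 0 <= x -> is_derive w x (dw x))
  (Hda_cont : forall x, 0 <= x -> continuous da x)
  (Hdw_cont : forall x, 0 <= x -> continuous dw x)
  (Hda_pos : forall x, 0 <= x -> 0 < da x)
  (Hdw_nonpos : forall x, 0 <= x -> dw x <= 0)
  (q l SH bHM bMH gamma mu rho k : R)
  (Hq : 0 <= q < 1) (Hl : 0 <= l) (HSH : 0 < SH)
  (HbHM : 0 < bHM) (HbMH : 0 < bMH) (Hgamma : 0 < gamma) (Hmu : 0 < mu)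
  (Hrho : 0 < rho)
  (HRe : Re_hat bHM bMH gamma mu rho SH * hfun l (pfun a w 0) q > 1)
  (IHs IMs Js : R)
  (Heq1 : rhs_IH a w l q bHM rho SH gamma IHs IMs Js = 0)
  (Heq2 : rhs_IM a w l q bMH mu IHs IMs Js = 0)
  (Heq3 : rhs_J k IHs IMs Js = 0)
  (HIHs : 0 < IHs)
  (Hgm : gamma >= mu)
  (Hk : 0 < k) :
  locally_asymptotically_stable
    (rhs_IH a w l q bHM rho SH gamma) (rhs_IM a w l q bMH mu) (rhs_J k)
    IHs IMs Js.
Proof.
  assert (HJs : Js = IHs).
  { unfold rhs_J in Heq3. assert (k * (IHs - Js) = 0) by lra.
    apply Rmult_integral in H. destruct H; lra. }
  assert (HJs0 : 0 <= Js) by lra.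
  set (K1 := bHM * rho * SH).
  set (K2 := bMH).
  assert (HK1 : 0 < K1) by (unfold K1; repeat apply Rmult_lt_0_compat; lra).
  assert (HK2 : 0 < K2) by (unfold K2; lra).
  assert (Hpc : forall x, 0 <= x -> 0 < pfun a w x < 1 /\ 0 < cfun (pfun a w x) q).
  { intros x Hx. assert (Hax := Ha_pos x Hx). assert (Hwx := Hw_pos x Hx).
    assert (Hp0 : 0 < pfun a w x < 1).
    { unfold pfun. split. apply Rdiv_lt_0_compat; lra.
      apply Rmult_lt_reg_r with (a x + w x). lra. field_simplify; lra. }
    split; auto. unfold cfun. assert (pfun a w x * (1 - q) <= pfun a w x * 1) by (apply Rmult_le_compat_l; lra). lra. }
  set (fs := ffun a w l q Js).
  assert (Hfs : 0 < fs).
  { unfold fs, ffun, hfun. destruct (Hpc Js HJs0) as [_ Hc]. apply Rdiv_lt_0_compat; lra. }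
  assert (E1 : K1 * fs * IMs = gamma * IHs).
  { unfold rhs_IH in Heq1. unfold K1, fs. lra. }
  assert (E2 : K2 * fs * IHs = mu * IMs).
  { unfold rhs_IM in Heq2. unfold K2, fs. lra. }
  assert (HIMs : 0 < IMs).
  { assert (0 < K2 * fs * IHs) by (apply Rmult_lt_0_compat; [apply Rmult_lt_0_compat|]; lra). apply (Rmult_lt_reg_l mu); lra. }
  assert (HAB : K1 * fs * (K2 * fs) = gamma * mu).
  { apply Rmult_eq_reg_r with (IHs * IMs). 2: apply Rgt_not_eq, Rmult_lt_0_compat; lra.
    transitivity ((K1 * fs * IMs) * (K2 * fs * IHs)). ring. rewrite E1, E2. ring. }
  assert (Hlpos : 0 < l).
  { destruct Hl as [Hl|Hl]; auto. exfalso. subst l.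
    assert (Hf1 : forall x, 0 <= x -> hfun 0 (pfun a w x) q = 1).
    { intros x Hx. destruct (Hpc x Hx) as [_ Hc]. unfold hfun. field. lra. }
    assert (fs = 1) by (apply Hf1; auto).
    assert (HRe1 : Re_hat bHM bMH gamma mu rho SH = 1).
    { unfold Re_hat.
      replace (bHM * bMH / (gamma * mu) * rho * SH) with (K1 * fs * (K2 * fs) / (gamma * mu)).
      rewrite HAB. replace (gamma * mu / (gamma * mu)) with 1 by (field; lra). apply sqrt_1.
      rewrite H. unfold K1, K2. field. lra. }
    rewrite HRe1, (Hf1 0 (Rle_refl 0)) in HRe. lra. }
  assert (Hder := ffun_derive a w da dw l q Js (Ha_pos Js HJs0) (Hw_pos Js HJs0)
                    (Ha_der Js HJs0) (Hw_der Js HJs0) Hq Hl).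
  set (pp := (da Js * w Js - a Js * dw Js) / (a Js + w Js) ^ 2) in Hder.
  set (cc := cfun (pfun a w Js) q) in Hder.
  set (fp := pp * (- (1 - q) * l / (cc + l) ^ 2)) in Hder.
  assert (Hpp : 0 < pp).
  { unfold pp. apply Rdiv_lt_0_compat. 2: apply pow_lt; generalize (Ha_pos Js HJs0) (Hw_pos Js HJs0); lra.
    assert (0 < da Js * w Js) by (apply Rmult_lt_0_compat; auto).
    assert (0 <= a Js * - dw Js) by (apply Rmult_le_pos; [generalize (Ha_pos Js HJs0); lra| generalize (Hdw_nonpos Js HJs0); lra]).
    lra. }
  assert (Hcc : 0 < cc) by (unfold cc; apply (Hpc Js HJs0)).
  set (dd := - fp).
  assert (Hdd : 0 < dd).
  { unfold dd, fp. assert (0 < (1 - q) * l / (cc + l) ^ 2).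
    { apply Rdiv_lt_0_compat. apply Rmult_lt_0_compat; lra. apply pow_lt; lra. }
    replace (- (pp * (- (1 - q) * l / (cc + l) ^ 2))) with (pp * ((1 - q) * l / (cc + l) ^ 2)) by (field; lra).
    apply Rmult_lt_0_compat; auto. }
  set (A := K1 * fs).
  assert (HA : 0 < A) by (unfold A; apply Rmult_lt_0_compat; auto).
  set (A1 := K1 * dd * IMs).
  assert (HA1 : 0 < A1) by (unfold A1; apply Rmult_lt_0_compat; [apply Rmult_lt_0_compat|]; auto).
  set (dg := gamma - mu).
  assert (Hdg : 0 <= dg) by (unfold dg; lra).
  destruct (alg_pos mu dg A1 k Hmu Hdg HA1 Hk) as [HW1 [HW2 [HW3 [HDET [HMIN2 HM11]]]]].
  set (m11 := M11 mu dg A1 k). set (m12 := M12 mu dg A1 k). set (m13 := M13 mu dg A1 k).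
  set (m22 := M22 mu dg A1 k). set (m23 := M23 mu dg A1 k). set (m33 := M33 mu dg A1 k).
  destruct (qf_lower m11 m12 m13 m22 m23 m33) as [Klow [HKlow Hlow]].
  { unfold m11. rewrite M11_eq. exact HM11. }
  { unfold m11, m12, m22. rewrite MIN2_eq. exact HMIN2. }
  { unfold m11, m12, m13, m22, m23, m33. rewrite DET_eq. exact HDET. }
  destruct (qf_upper m11 m12 m13 m22 m23 m33) as [Kup [HKup Hup]].
  set (V := fun y1 y2 y3 => qf m11 m12 m13 m22 m23 m33 (y1 - IHs) (mu * (y1 - IHs) + A * (y2 - IMs)) (y3 - Js)).
  set (DV := fun y1 y2 y3 v1 v2 v3 =>
     2 * ((m11 * (y1 - IHs) + m12 * (mu * (y1 - IHs) + A * (y2 - IMs)) + m13 * (y3 - Js)) * v1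
        + (m12 * (y1 - IHs) + m22 * (mu * (y1 - IHs) + A * (y2 - IMs)) + m23 * (y3 - Js)) * (mu * v1 + A * v2)
        + (m13 * (y1 - IHs) + m23 * (mu * (y1 - IHs) + A * (y2 - IMs)) + m33 * (y3 - Js)) * v3)).
  set (Wmin := Rmin (W1 mu dg A1 k) (Rmin (W2 mu dg A1 k) (W3 mu dg A1 k))).
  assert (HWmin : 0 < Wmin) by (unfold Wmin; repeat apply Rmin_pos; auto).
  assert (HWm1 : Wmin <= W1 mu dg A1 k) by (unfold Wmin; apply Rmin_l).
  assert (HWm2 : Wmin <= W2 mu dg A1 k) by (unfold Wmin; eapply Rle_trans; [apply Rmin_r|apply Rmin_l]).
  assert (HWm3 : Wmin <= W3 mu dg A1 k) by (unfold Wmin; eapply Rle_trans; [apply Rmin_r|apply Rmin_r]).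
  set (Mb := 1 + Rabs m11 + Rabs m12 + Rabs m13 + Rabs m22 + Rabs m23 + Rabs m33).
  assert (HMbs : 0 <= Rabs m11 /\ 0 <= Rabs m12 /\ 0 <= Rabs m13 /\ 0 <= Rabs m22 /\ 0 <= Rabs m23 /\ 0 <= Rabs m33).
  { repeat split; apply Rabs_pos. }
  assert (HMb : 0 < Mb) by (unfold Mb; lra).
  set (Kr := (1 + mu) * K1 * (IMs + 1 + dd) + A * K2 * (IHs + 1 + dd)).
  assert (HKr : 0 < Kr).
  { unfold Kr. assert (0 < (1 + mu) * K1 * (IMs + 1 + dd)) by (apply Rmult_lt_0_compat; [apply Rmult_lt_0_compat|]; lra).
    assert (0 < A * K2 * (IHs + 1 + dd)) by (apply Rmult_lt_0_compat; [apply Rmult_lt_0_compat|]; lra). lra. }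
  set (th := Rmin 1 (Wmin / (16 * Mb * Kr))).
  assert (Hth : 0 < th).
  { unfold th. apply Rmin_pos. lra. apply Rdiv_lt_0_compat; auto. apply Rmult_lt_0_compat; [apply Rmult_lt_0_compat|]; lra. }
  assert (Hth1 : th <= 1) by (unfold th; apply Rmin_l).
  assert (Hth2 : th <= Wmin / (16 * Mb * Kr)) by (unfold th; apply Rmin_r).
  destruct (deriv_rem (ffun a w l q) Js fp Hder th Hth) as [del [Hdel Hrem]].
  apply (LAS_abstract _ _ _ IHs IMs Js V DV
           ((1 + (2 + 2 * mu ^ 2) / A ^ 2) * Klow) (Kup * (1 + 2 * mu ^ 2 + 2 * A ^ 2))
           (Wmin / (2 * Kup)) (Rmin (th ^ 2) (del ^ 2))).
  - apply Rmult_lt_0_compat; auto.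
    assert (0 < (2 + 2 * mu ^ 2) / A ^ 2) by (apply Rdiv_lt_0_compat; [generalize (pow2_ge_0 mu); lra | apply pow_lt; lra]).
    lra.
  - apply Rmult_lt_0_compat; auto. generalize (pow2_ge_0 mu) (pow2_ge_0 A); lra.
  - apply Rdiv_lt_0_compat; lra.
  - apply Rmin_pos; apply pow_lt; lra.
  -
    intros x1 x2 x3 t v1 v2 v3 D1 D2 D3. unfold V, DV.
    eapply is_derive_eq.
    { eapply (qf_derive m11 m12 m13 m22 m23 m33 (fun s => x1 s - IHs)
        (fun s => mu * (x1 s - IHs) + A * (x2 s - IMs)) (fun s => x3 s - Js)); dtac. }
    cbv beta. match goal with |- ?u = ?v => change (@eq R u v) end. ring.
  -
    intros x1 x2 x3 L1 L2 L3. unfold V. apply qf_lim; ltac_.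
  -
    intros y1 y2 y3. unfold Nsq, V.
    eapply Rle_trans. apply (tr1 mu A (y1 - IHs) (y2 - IMs) (y3 - Js) HA).
    rewrite Rmult_assoc. apply Rmult_le_compat_l.
    { assert (0 < (2 + 2 * mu ^ 2) / A ^ 2) by (apply Rdiv_lt_0_compat; [generalize (pow2_ge_0 mu); lra | apply pow_lt; lra]). lra. }
    apply Hlow.
  -
    intros y1 y2 y3. unfold Nsq, V.
    eapply Rle_trans. apply Hup. rewrite Rmult_assoc. apply Rmult_le_compat_l. lra.
    apply tr2.
  -
    intros y1 y2 y3 HN. unfold Nsq in HN.
    set (X := y1 - IHs) in *. set (Y := y2 - IMs) in *. set (Z := y3 - Js) in *.
    assert (HX : Rabs X <= th).
    { apply Rlt_le, abs_lt_of_sq; auto. generalize (pow2_ge_0 Y) (pow2_ge_0 Z) (Rmin_l (th ^ 2) (del ^ 2)). lra. }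
    assert (HY : Rabs Y <= th).
    { apply Rlt_le, abs_lt_of_sq; auto. generalize (pow2_ge_0 X) (pow2_ge_0 Z) (Rmin_l (th ^ 2) (del ^ 2)). lra. }
    assert (HZ : Rabs Z < del).
    { apply abs_lt_of_sq; auto. generalize (pow2_ge_0 X) (pow2_ge_0 Y) (Rmin_r (th ^ 2) (del ^ 2)). lra. }
    set (fy := ffun a w l q y3).
    set (phi := fy - fs).
    set (eta := phi + dd * Z).
    assert (Heta : Rabs eta <= th * Rabs Z).
    { specialize (Hrem Z HZ). replace (Js + Z) with y3 in Hrem by (unfold Z; ring).
      unfold eta, phi, fy, dd, fs. replace (ffun a w l q y3 - ffun a w l q Js + - fp * Z)
        with (ffun a w l q y3 - ffun a w l q Js - fp * Z) by ring. exact Hrem. }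
    destruct (R_bounds K1 K2 mu A IMs IHs dd th X Y Z eta phi) as [HR1 HR2]; try lra.
    { unfold eta; ring. }
    set (R1 := K1 * (eta * IMs + phi * Y)) in *.
    set (R2 := K2 * (eta * IHs + phi * X)) in *.
    set (x := X). set (s := mu * X + A * Y). set (z := Z).
    assert (P1 : rhs_IH a w l q bHM rho SH gamma y1 y2 y3 = - gg mu dg * x + s - A1 * z + R1).
    { assert (rhs_IH a w l q bHM rho SH gamma y1 y2 y3 - (- gg mu dg * x + s - A1 * z + R1)
              = K1 * fs * IMs - gamma * IHs).
      { unfold rhs_IH, gg, x, s, z, R1, eta, phi, X, Y, Z, A, A1, dg, fy, K1. ring. }
      lra. }
    assert (P2 : mu * rhs_IH a w l q bHM rho SH gamma y1 y2 y3 + A * rhs_IM a w l q K2 mu y1 y2 y3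
                 = - bb mu A1 * z + (mu * R1 + A * R2)).
    { assert (mu * rhs_IH a w l q bHM rho SH gamma y1 y2 y3 + A * rhs_IM a w l q K2 mu y1 y2 y3
                 - (- bb mu A1 * z + (mu * R1 + A * R2))
              = mu * (K1 * fs * IMs - gamma * IHs) + A * (K2 * fs * IHs - mu * IMs)
                + (K1 * fs * (K2 * fs) - gamma * mu) * X - dd * Z * K1 * (K2 * fs * IHs - mu * IMs)).
      { unfold rhs_IH, rhs_IM, bb, x, s, z, R1, R2, eta, phi, X, Y, Z, A, A1, fy, K1, K2. ring. }
      rewrite E1, E2, HAB in H. lra. }
    assert (P3 : rhs_J k y1 y2 y3 = k * x - k * z).
    { unfold rhs_J, x, z, X, Z. rewrite HJs. ring. }
    assert (HDV : DV y1 y2 y3 (rhs_IH a w l q bHM rho SH gamma y1 y2 y3) (rhs_IM a w l q K2 mu y1 y2 y3)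
                    (rhs_J k y1 y2 y3)
          = - (W1 mu dg A1 k * x ^ 2 + W2 mu dg A1 k * s ^ 2 + W3 mu dg A1 k * z ^ 2)
            + 2 * ((m11 * x + m12 * s + m13 * z) * R1 + (m12 * x + m22 * s + m23 * z) * (mu * R1 + A * R2))).
    { unfold DV. fold X Y Z. fold x. fold s. fold z. rewrite P2, P1, P3.
      rewrite <- (deriv_id mu dg A1 k x s z). unfold m11, m12, m13, m22, m23, m33, s, x, z. ring. }
    rewrite HDV.
    eapply Rle_trans.
    apply (est_core _ _ _ Wmin Mb Kr th x s z _ _ R1 (mu * R1 + A * R2)); auto.
    all: try (apply row_bound; unfold Mb; lra).
    all: try (unfold z; exact HR1).
    all: try (unfold z; exact HR2).
    { assert (HVup : V y1 y2 y3 <= Kup * (x ^ 2 + s ^ 2 + z ^ 2)) by (unfold V; apply Hup).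
      replace (- (Wmin / (2 * Kup)) * V y1 y2 y3) with (- (Wmin / 2) * (V y1 y2 y3 / Kup)) by (field; lra).
      apply Ropp_le_contravar in HVup.
      assert (V y1 y2 y3 / Kup <= x ^ 2 + s ^ 2 + z ^ 2).
      { apply Rmult_le_reg_l with Kup; auto. replace (Kup * (V y1 y2 y3 / Kup)) with (V y1 y2 y3) by (field; lra). lra. }
      assert (0 < Wmin / 2) by lra.
      assert ((Wmin / 2) * (V y1 y2 y3 / Kup) <= (Wmin / 2) * (x ^ 2 + s ^ 2 + z ^ 2)) by (apply Rmult_le_compat_l; lra).
      lra. }
Qed.
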